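(* Let $\ell$ be a positive integer and $a_1,\dots,a_\ell,b,c$ positive integers, and put $\vec k_1=(a_1,\dots,a_\ell,b)$ and $\vec k_2=(a_1,\dots,a_\ell,c)$. Then $\widetilde{C}_{\vec k_1}(q,t)=\widetilde{C}_{\vec k_2}(q,t)$, where $\widetilde{C}_{\vec k}(q,t)=\sum_{\pi\in\mathcal D_{\vec k}}q^{\mathrm{area}(\pi)}t^{\mathrm{depth}(\pi)}$.
   Context: For $\vec k=(k_1,\dots,k_m)$ put $|\vec k|=\sum k_i$, $N=|\vec k|+m$. A $\vec k$-Dyck path is a word $\pi=\pi_1\cdots\pi_N$ containing the letters $S^{k_1},\dots,S^{k_m}$ exactly once each and in this order, together with $|\vec k|$ letters $W$, such that all starting ranks are nonnegative, where $r_1=0$, $r_{i+1}=r_i+k_j$ if $\pi_i=S^{k_j}$ and $r_{i+1}=r_i-1$ if $\pi_i=W$. $\mathcal D_{\vec k}$ is the set of such paths. $\mathrm{area}(\pi)=\sum_j a_j$ where $a_j$ is the starting rank of $S^{k_j}$. Filling algorithm $\eta_*$: in a tableau of $m$ top-justified columns, column $i$ having $k_i+1$ cells, place $1$ at the top of column 1; for $i=2,\dots,N$, call an entry active if it is currently the bottom entry of a column $i'$ not yet containing $k_{i'}+1$ entries; if $\pi_i=W$ place $i$ immediately below the largest active entry, otherwise place $i$ at the top of the first empty column. Ranking algorithm $\gamma_*$: column 1 gets ranks $0,\dots,k_1$ top to bottom; for $i\ge2$, if the top entry of column $i$ of $\eta_*(\pi)$ is $A+1$ and $A$ has rank $\alpha$,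 column $i$ gets ranks $\alpha,\dots,\alpha+k_i$ top to bottom. $\mathrm{depth}(\pi)$ is the sum of the first-row ranks. *)

(* Defs.v *)
From mathcomp Require Import all_boot all_order all_algebra.
Set Implicit Arguments. Unset Strict Implicit. Unset Printing Implicit Defensive.
Import GRing.Theory Num.Theory.

(* A vector k = (k_1,...,k_m) is a [seq nat]; indices are 0-based internally.
   A word pi in the letters {S^{k_j}, W} is a [seq bool]: [true] = an S-letter,
   [false] = W.  Since the S-letters must occur in the order S^{k_1},...,S^{k_m},
   the j-th [true] (0-based) is the letter S^{k_(j+1)}. *)

Definition Nk (k : seq nat) : nat := sumn k + size k.

Fixpoint ranks_aux (k : seq nat) (r : int) (j : nat) (w : seq bool) : seq int :=
  match w with
  | [::] => [::]
  | b :: w' => r :: ranks_aux k (if b then (r + (nth 0%N k j)%:Z)%R else (r - 1)%R)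
                              (if b then j.+1 else j) w'
  end.

Definition ranks (k : seq nat) (w : seq bool) : seq int := ranks_aux k 0%R 0 w.

Definition is_dyck (k : seq nat) (w : seq bool) : bool :=
  [&& size w == Nk k, count id w == size k & all (fun r : int => (0 <= r)%R) (ranks k w)].

Definition area (k : seq nat) (w : seq bool) : nat :=
  sumn [seq absz p.1 | p <- zip (ranks k w) w & p.2].

(* a tableau is a seq of m columns, each column a seq of entries read top to bottom *)
Definition bottom (T : seq (seq nat)) (c : nat) : nat := last 0%N (nth [::] T c).

Definition active_cols (k : seq nat) (T : seq (seq nat)) : seq nat :=
  [seq c <- iota 0 (size T) |
     (0 < size (nth [::] T c))%N && (size (nth [::] T c) < (nth 0%N k c).+1)%N].

Definition fill_step (k : seq nat) (T : seq (seq nat)) (i : nat) (b : bool)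
  : seq (seq nat) :=
  if b then
    set_nth [::] T (find (fun col : seq nat => nilp col) T) [:: i]
  else
    match active_cols k T with
    | [::] => T
    | c0 :: cs =>
        let cb := foldl (fun best c => if (bottom T best < bottom T c)%N then c else best)
                        c0 cs in
        set_nth [::] T cb (rcons (nth [::] T cb) i)
    end.

Fixpoint fill_aux (k : seq nat) (T : seq (seq nat)) (i : nat) (w : seq bool)
  : seq (seq nat) :=
  match w with
  | [::] => T
  | b :: w' => fill_aux k (fill_step k T i b) i.+1 w'
  end.

Definition fill (k : seq nat) (w : seq bool) : seq (seq nat) :=
  fill_aux k (set_nth [::] (nseq (size k) [::]) 0 [:: 1%N]) 2 (behead w).

(* rank of the top entry of each column; the entry at depth p (0-based) of
   column c has rank toprank_c + p *)
Definition top_ranks (T : seq (seq nat)) : seq nat :=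
  foldl (fun (rs : seq nat) (c : nat) =>
           if c == 0%N then rcons rs 0%N
           else
             let A := (head 0%N (nth [::] T c)).-1 in
             let c' := find (fun col : seq nat => A \in col) T in
             rcons rs (nth 0%N rs c' + index A (nth [::] T c'))%N)
        [::] (iota 0 (size T)).

Definition depth (k : seq nat) (w : seq bool) : nat := sumn (top_ranks (fill k w)).

(* tilde C_k(q,t) = sum_{pi in D_k} q^area t^depth, evaluated in an arbitrary
   commutative ring (equality for all R, q, t is equivalent to equality of the
   formal bivariate polynomials, taking R = {poly {poly int}}). *)
Definition Ctilde (R : comNzRingType) (q t : R) (k : seq nat) : R :=
  (\sum_(w : (Nk k).-tuple bool | is_dyck k w) q ^+ area k w * t ^+ depth k w)%R.

(* Main.v *)
Require Import Defs.
From mathcomp Require Import all_boot all_order all_algebra zify.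
Set Implicit Arguments. Unset Strict Implicit. Unset Printing Implicit Defensive.
Import GRing.Theory Num.Theory.


Lemma sum_rcons_false (R : comNzRingType) n m (P : seq bool -> bool) (F : seq bool -> R) :
  m = n.+1 -> (forall w : seq bool, size w = m -> P w -> last true w = false) ->
  (\sum_(w : m.-tuple bool | P w) F w =
   \sum_(w : n.-tuple bool | P (rcons w false)) F (rcons w false))%R.
Proof.
move=> -> HP.
pose h (j : n.-tuple bool) : n.+1.-tuple bool := [tuple of rcons j false].
pose h' (w : n.+1.-tuple bool) : n.-tuple bool :=
  [tuple of rev (behead_tuple (rev_tuple w))].
rewrite (reindex_onto h h') /=.
  apply: eq_bigl => j; case: (P _); rewrite ?andbT ?andbF //.
  apply/eqP; apply: val_inj => /=.
  by rewrite rev_rcons /= revK.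
move=> w Pw; apply: val_inj => /=.
case: w Pw => s Hs Pw /=.
have := HP s (eqP Hs) Pw.
case/lastP: s Hs Pw => [//|s x] _ _.
by rewrite last_rcons => ->; rewrite rev_rcons /= revK.
Qed.





Fixpoint rk_after (k : seq nat) (r : int) (j : nat) (w : seq bool) : int :=
  match w with
  | [::] => r
  | b :: w' => rk_after k (if b then (r + (nth 0%N k j)%:Z)%R else (r - 1)%R)
                              (if b then j.+1 else j) w'
  end.

Lemma ranks_cat k r j u v :
  ranks_aux k r j (u ++ v) =
  ranks_aux k r j u ++ ranks_aux k (rk_after k r j u) (j + count id u) v.
Proof.
elim: u r j => [|x u IH] r j /=; first by rewrite addn0.
by rewrite IH; case: x => //=; rewrite addnS.
Qed.

Lemma size_ranks k r j u : size (ranks_aux k r j u) = size u.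
Proof. by elim: u r j => [|x u IH] r j //=; rewrite IH. Qed.

Lemma ranks_ext k k' r j u :
  (forall i, (i < j + count id u)%N -> nth 0%N k i = nth 0%N k' i) ->
  ranks_aux k r j u = ranks_aux k' r j u /\ rk_after k r j u = rk_after k' r j u.
Proof.
elim: u r j => [|x u IH] r j //= H.
case: x H => /= H.
  have Hj : nth 0%N k j = nth 0%N k' j by apply: H; lia.
  have H' : forall i, (i < j.+1 + count id u)%N -> nth 0%N k i = nth 0%N k' i.
    by move=> i Hi; apply: H; lia.
  by rewrite Hj; have [-> ->] := IH (r + (nth 0%N k' j)%:Z)%R j.+1 H'.
have H' : forall i, (i < j + count id u)%N -> nth 0%N k i = nth 0%N k' i.
  by move=> i Hi; apply: H; lia.
by have [-> ->] := IH (r - 1)%R j H'.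
Qed.

Lemma ranks_nseq k k' r j j' n :
  ranks_aux k r j (nseq n false) = ranks_aux k' r j' (nseq n false).
Proof. by elim: n r => [|n IH] r //=; rewrite IH. Qed.

Lemma rk_after_formula k r j u :
  rk_after k r j u = (r + (sumn [seq nth 0%N k i | i <- iota j (count id u)])%:Z
                       - (count negb u)%:Z)%R.
Proof.
elim: u r j => [|x u IH] r j /=; first by rewrite addr0 subr0.
case: x => /=; rewrite IH /=.
  rewrite add0n; lia.
rewrite add0n; lia.
Qed.

Lemma rcons_nseq_false n : rcons (nseq n false) false = nseq n.+1 false.
Proof. by elim: n => //= n ->. Qed.

Lemma decomp (w : seq bool) c : count id w = c.+1 ->
  exists p n, w = p ++ true :: nseq n false /\ count id p = c.
Proof.
elim/last_ind: w c => [|s x IH] c //=.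
rewrite -cats1 count_cat /= addn0; case: x => /=.
  by rewrite addn1 => -[Hc]; exists s, 0%N; rewrite cats1.
rewrite addn0 => /IH [p [n [-> Hp]]]; exists p, n.+1; split=> //.
by rewrite -catA /= -[_ :: _ ++ _]/((true :: nseq n false) ++ _) cats1 /= rcons_nseq_false.
Qed.

Lemma nth_rcons_lt (a : seq nat) x i : (i < size a)%N -> nth 0%N (rcons a x) i = nth 0%N a i.
Proof. by move=> H; rewrite nth_rcons H. Qed.

Lemma sumn_iota_rcons (a : seq nat) x :
  sumn [seq nth 0%N (rcons a x) i | i <- iota 0 (size a)] = sumn a.
Proof.
have -> : [seq nth 0%N (rcons a x) i | i <- iota 0 (size a)] =
          [seq nth 0%N a i | i <- iota 0 (size a)].
  by apply/eq_in_map => i; rewrite mem_iota add0n => /andP [_ Hi]; rewrite nth_rcons_lt.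
by have := mkseq_nth 0%N a; rewrite /mkseq => ->.
Qed.

Lemma Nk_rcons a b : Nk (rcons a b.+1) = (Nk (rcons a b)).+1.
Proof. rewrite /Nk !sumn_rcons !size_rcons; lia. Qed.

Lemma rcons_decomp (p : seq bool) n :
  rcons (p ++ true :: nseq n false) false = p ++ true :: nseq n.+1 false.
Proof. by rewrite rcons_cat rcons_cons rcons_nseq_false. Qed.

Section Step.
Variables (a : seq nat) (b : nat).
Local Notation k := (rcons a b).
Local Notation k' := (rcons a b.+1).

Lemma ranks_p p : count id p = size a ->
  ranks_aux k 0 0 p = ranks_aux k' 0 0 p /\ rk_after k 0 0 p = rk_after k' 0 0 p.
Proof.
move=> Hp; apply: ranks_ext => i; rewrite add0n Hp => Hi.
by rewrite !nth_rcons_lt.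
Qed.

Lemma ranks_decomp kk p n : count id p = size a -> 
  ranks kk (p ++ true :: nseq n false) = ranks_aux kk 0 0 p ++
    rk_after kk 0 0 p :: ranks_aux kk (rk_after kk 0 0 p + (nth 0%N kk (size a))%:Z)%R
       (size a).+1 (nseq n false).
Proof. by move=> Hp; rewrite /ranks ranks_cat add0n Hp. Qed.

Lemma dyck_step w : is_dyck k' (rcons w false) = is_dyck k w.
Proof.
rewrite /is_dyck.
have -> : count id (rcons w false) = count id w.
  by rewrite -cats1 count_cat addn0.
rewrite size_rcons Nk_rcons eqSS !size_rcons.
case Hc: (count id w == (size a).+1); rewrite ?andbF //=.
have [p [n [Ew Hp]]] := decomp (eqP Hc).
rewrite Ew rcons_decomp.
rewrite !ranks_decomp // !nth_rcons ltnn eqxx.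
have [-> ->] := ranks_p Hp.
rewrite !all_cat /=.
rewrite (ranks_nseq k' k _ _ (size a).+1 n).
move: (rk_after k' 0 0 p) => r0.
rewrite (_ : (r0 + b.+1%:Z - 1 = r0 + b%:Z)%R); last by lia.
case: (size _ == _) => //=; case: (all _ (ranks_aux k' 0 0 p)) => //=.
case H0: (0 <= r0)%R => //=.
by rewrite (_ : (0 <= r0 + b.+1%:Z)%R = true) //; lia.
Qed.

Lemma last_false w : size w = Nk k' -> is_dyck k' w -> last true w = false.
Proof.
rewrite /is_dyck => Hs /and3P [_ Hc Hr].
rewrite size_rcons in Hc.
have [p [n [Ew Hp]]] := decomp (eqP Hc).
case: n Ew => [|n] Ew; last first.
  by rewrite Ew last_cat /=; elim: n {Ew}.
exfalso; move: Hr; rewrite Ew ranks_decomp // all_cat /= => /and3P [_ H0 _].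
move: H0; rewrite rk_after_formula Hp sumn_iota_rcons.
have : size w = (count id p + count negb p).+1.
  by rewrite Ew size_cat /= addn1 -(count_predC id p).
rewrite Hs /Nk sumn_rcons size_rcons Hp.
lia.
Qed.

Lemma filter_zip_nseq (S : seq int) n :
  [seq x <- zip S (nseq n false) | x.2] = [::].
Proof. by elim: S n => [|s S IH] [|n] //=. Qed.

Lemma area_decomp kk p n : count id p = size a ->
  area kk (p ++ true :: nseq n false) =
  (sumn [seq absz x.1 | x <- zip (ranks_aux kk 0 0 p) p & x.2] + absz (rk_after kk 0 0 p))%N.
Proof.
move=> Hp; rewrite /area ranks_decomp // zip_cat ?size_ranks //.
by rewrite filter_cat /= filter_zip_nseq map_cat sumn_cat /= addn0.
Qed.

Lemma area_step w : count id w = (size a).+1 -> area k' (rcons w false) = area k w.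
Proof.
move=> Hc; have [p [n [Ew Hp]]] := decomp Hc.
rewrite Ew rcons_decomp.
by rewrite !area_decomp //; have [-> ->] := ranks_p Hp.
Qed.

End Step.

Lemma foldl_mem (f : nat -> nat -> nat) x l :
  (forall x c, f x c = x \/ f x c = c) -> foldl f x l \in x :: l.
Proof.
move=> Hf; elim: l x => [|c l IH] x /=; first by rewrite inE.
have := IH (f x c); rewrite !inE.
case: (Hf x c) => ->; first by case/orP => ->; rewrite ?orbT.
by case/orP => ->; rewrite ?orbT.
Qed.

Lemma FS k T i : fill_step k T i false = T \/
  exists cb, (cb < size T)%N /\ nth [::] T cb != [::] /\
   fill_step k T i false = set_nth [::] T cb (rcons (nth [::] T cb) i).
Proof.
rewrite /fill_step; case E: (active_cols k T) => [|c0 cs]; [by left | right].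
set cb := foldl _ _ _.
have : cb \in active_cols k T.
  rewrite E; apply: foldl_mem => x c; case: ifP; by [right | left].
rewrite mem_filter mem_iota add0n => /andP [/andP [Hne _] /andP [_ Hlt]].
exists cb; split => //; split => //.
by apply/eqP => Hc; rewrite Hc in Hne.
Qed.

Lemma fill_aux_cat k T i u v :
  fill_aux k T i (u ++ v) = fill_aux k (fill_aux k T i u) (i + size u) v.
Proof. by elim: u T i => [|x u IH] T i /=; rewrite ?addn0 // IH addnS. Qed.

Lemma find_first (T : seq (seq nat)) (p : pred (seq nat)) s :
  (forall c, (c < s)%N -> ~~ p (nth [::] T c)) -> (s < size T)%N -> p (nth [::] T s) ->
  find p T = s.
Proof.
elim: T s => [|x T IH] [|s] //= H Hs Hp; first by rewrite Hp.
have := H 0%N isT; rewrite /= => /negbTE ->; congr S; apply: IH => // c Hc.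
exact: (H c.+1).
Qed.

Lemma fill_aux_cons k T i x u :
  fill_aux k T i (x :: u) = fill_aux k (fill_step k T i x) i.+1 u.
Proof. by []. Qed.

Definition Inv (m s : nat) (T : seq (seq nat)) :=
  size T = m.+1 /\ forall c, (nth [::] T c != [::]) = (c < s)%N.

Lemma prefix k k' m T s i u : (forall c, (c < m)%N -> nth 0%N k c = nth 0%N k' c) ->
  Inv m s T -> (s + count id u <= m)%N ->
  fill_aux k T i u = fill_aux k' T i u /\ Inv m (s + count id u) (fill_aux k T i u).
Proof.
move=> Hk; elim: u T s i => [|x u IH] T s i; first by rewrite /= addn0.
rewrite !fill_aux_cons.
move=> [HsT HT] Hs; case: x Hs => Hs; rewrite /= in Hs.
  have Hf : find (fun col : seq nat => nilp col) T = s.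
    apply: find_first.
    - by move=> c Hc; move: (HT c); rewrite Hc; case: (nth _ _ _).
    - by rewrite HsT; lia.
    - by move: (HT s); rewrite ltnn; case: (nth _ _ _).
  have Hinv : Inv m s.+1 (fill_step k T i true).
    rewrite /fill_step Hf; split; first by rewrite size_set_nth HsT; lia.
    move=> c; rewrite nth_set_nth /=; case: (c =P s) => [->|Hc]; first by rewrite ltnSn.
    by move/eqP: Hc => Hc; rewrite HT; lia.
  have Hs' : (s.+1 + count id u <= m)%N by lia.
  have := IH (fill_step k T i true) s.+1 i.+1 Hinv Hs'.
  have -> : (s + count id (true :: u) = s.+1 + count id u)%N by rewrite /=; lia.
  by move=> -[<- H2]; split.
have Eact : active_cols k T = active_cols k' T.
  apply: eq_filter => c; case: (ltnP c m) => Hc; first by rewrite Hk.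
  have : nth [::] T c = [::] by apply/eqP; rewrite -[_ == _]negbK HT; lia.
  by move=> ->.
have Heq : fill_step k T i false = fill_step k' T i false by rewrite /fill_step Eact.
have Hinv : Inv m s (fill_step k T i false).
  case: (FS k T i) => [->|[cb [Hcb [Hne ->]]]]; first by split.
  split; first by rewrite size_set_nth HsT; rewrite HsT in Hcb; lia.
  move=> c; rewrite nth_set_nth /=; case: (c =P cb) => [->|Hc]; last by rewrite HT.
  by rewrite -HT Hne; case: (nth [::] T cb).
have Hs' : (s + count id u <= m)%N by lia.
have := IH _ s i.+1 Hinv Hs'.
have -> : (s + count id (false :: u) = s + count id u)%N by rewrite /=.
by rewrite Heq => -[<- H2]; split.
Qed.

Definition Bd (i : nat) (T : seq (seq nat)) := forall c, all (fun e => e < i)%N (nth [::] T c).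

Lemma Bd_weak i T : Bd i T -> Bd i.+1 T.
Proof. by move=> H c; apply: sub_all (H c) => e /= He; apply: ltnW. Qed.

Lemma Bd_step k T i x : Bd i T -> Bd i.+1 (fill_step k T i x).
Proof.
move=> H; case: x.
  move=> c; rewrite /fill_step nth_set_nth /=; case: ifP => _; first by rewrite /= ltnSn.
  exact: Bd_weak H c.
case: (FS k T i) => [->|[cb [_ [_ ->]]]]; first exact: Bd_weak.
move=> c; rewrite nth_set_nth /=; case: (c =P cb) => [_|_]; last exact: Bd_weak H c.
by rewrite all_rcons ltnSn /=; apply: Bd_weak H cb.
Qed.

Lemma Bd_aux k T i u : Bd i T -> Bd (i + size u) (fill_aux k T i u).
Proof.
elim: u T i => [|x u IH] T i H; first by rewrite addn0.
by rewrite fill_aux_cons /= addnS -addSn; apply: IH; apply: Bd_step.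
Qed.

Definition Rel (M : nat) (T T' : seq (seq nat)) :=
  size T = size T' /\ forall c, exists P X Y,
    [/\ nth [::] T c = P ++ X, nth [::] T' c = P ++ Y,
        all (fun e => M <= e)%N X, all (fun e => M <= e)%N Y &
        all (fun e => e < M)%N P /\ (P = [::] -> X = [::] /\ Y = [::])].

Lemma Rel_refl M T : Bd M T -> Rel M T T.
Proof.
move=> H; split=> // c; exists (nth [::] T c), [::], [::].
by split; rewrite ?cats0.
Qed.

Lemma Rel_sym M T T' : Rel M T T' -> Rel M T' T.
Proof.
move=> [Hs H]; split=> // c; have [P [X [Y [H1 H2 H3 H4 [H5 H6]]]]] := H c.
exists P, Y, X; split=> //; split=> // /H6 [-> ->].
by [].
Qed.

Lemma Rel_stepl M k T T' i : Rel M T T' -> (M <= i)%N -> Rel M (fill_step k T i false) T'.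
Proof.
move=> [Hs H] Hi; case: (FS k T i) => [->|[cb [Hcb [Hne ->]]]]; first by split.
split; first by rewrite size_set_nth -Hs; lia.
move=> c; rewrite nth_set_nth /=; case: (c =P cb) => [->|_]; last exact: H.
have [P [X [Y [H1 H2 H3 H4 [H5 H6]]]]] := H cb.
exists P, (rcons X i), Y; split.
- by rewrite H1 rcons_cat.
- by [].
- by rewrite all_rcons Hi.
- by [].
split=> // HP; move: Hne; rewrite H1 HP; have [-> _] := H6 HP.
by [].
Qed.

Lemma Rel_nseq M k k' T T' i n n' : Rel M T T' -> (M <= i)%N ->
  Rel M (fill_aux k T i (nseq n false)) (fill_aux k' T' i (nseq n' false)).
Proof.
move=> H Hi.
have HL : forall n T T' i, Rel M T T' -> (M <= i)%N ->
    Rel M (fill_aux k T i (nseq n false)) T'.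
  elim=> [|n0 IH] T0 T0' i0 H0 Hi0 //=.
  apply: IH; last by lia.
  exact: Rel_stepl.
have HR : forall n T T' i, Rel M T T' -> (M <= i)%N ->
    Rel M T (fill_aux k' T' i (nseq n false)).
  elim=> [|n0 IH] T0 T0' i0 H0 Hi0 //=.
  apply: IH; last by lia.
  apply: Rel_sym; apply: Rel_stepl => //; exact: Rel_sym.
exact: HR (HL _ _ _ _ H Hi) Hi.
Qed.

Lemma find_rel (T T' : seq (seq nat)) (p p' : pred (seq nat)) :
  size T = size T' -> (forall c, p (nth [::] T c) = p' (nth [::] T' c)) ->
  find p T = find p' T'.
Proof.
elim: T T' => [|x T IH] [|y T'] //= [Hs] H.
by have := H 0%N; rewrite /= => ->; rewrite (IH T') // => c; apply: (H c.+1).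
Qed.

Lemma foldl_ext (f g : seq nat -> nat -> seq nat) rs l :
  (forall rs c, f rs c = g rs c) -> foldl f rs l = foldl g rs l.
Proof. by move=> H; elim: l rs => //= c l IH rs; rewrite H IH. Qed.

Lemma top_ranks_Rel M T T' : (0 < M)%N -> Rel M T T' -> top_ranks T = top_ranks T'.
Proof.
move=> HM [Hsz HR]; rewrite /top_ranks Hsz.
apply: foldl_ext => rs c.
case: (c == 0%N) => //.
have [P [X [Y [H1 H2 H3 H4 [H5 H6]]]]] := HR c.
have [Hh HA] : head 0%N (nth [::] T c) = head 0%N (nth [::] T' c) /\
               ((head 0%N (nth [::] T c)).-1 < M)%N.
  rewrite H1 H2; case: P H1 H2 H5 H6 => [|p0 P] H1 H2 H5 H6.
    by have [-> ->] := H6 erefl.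
  by move: H5 => /= /andP [Hp _]; split => //; lia.
rewrite -Hh; move: HA; set A := (head 0%N (nth [::] T c)).-1 => HA.
have Hmem : forall c, (A \in nth [::] T c) = (A \in nth [::] T' c).
  move=> c0; have [P0 [X0 [Y0 [G1 G2 G3 G4 _]]]] := HR c0.
  rewrite G1 G2 !mem_cat.
  have -> : (A \in X0) = false.
    by apply/negbTE/negP => /(allP G3) /=; lia.
  have -> : (A \in Y0) = false.
    by apply/negbTE/negP => /(allP G4) /=; lia.
  by [].
have Hf : find (fun col => A \in col) T = find (fun col => A \in col) T'.
  exact: find_rel.
rewrite -Hf; set c' := find _ T.
case Hin: (A \in nth [::] T c').
  have [P0 [X0 [Y0 [G1 G2 G3 G4 _]]]] := HR c'.
  have HAX : (A \in X0) = false.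
    by apply/negbTE/negP => /(allP G3) /=; lia.
  move: Hin; rewrite G1 G2 !index_cat mem_cat HAX orbF => ->.
  by [].
have Hc' : (size T <= c')%N.
  rewrite leqNgt -has_find; apply/negP => /(nth_find [::]) /=.
  by rewrite -/c' Hin.
by rewrite [nth [::] T c']nth_default // [nth [::] T' c']nth_default // -Hsz.
Qed.

Lemma depth_step a b p' n : (0 < size a)%N -> count id p' = (size a).-1 ->
  depth (rcons a b) (true :: p' ++ true :: nseq n false) =
  depth (rcons a b.+1) (true :: p' ++ true :: nseq n.+1 false).
Proof.
move=> Ha Hp; rewrite /depth /fill !size_rcons.
cbn [behead].
set T1 := set_nth [::] (nseq (size a).+1 [::]) 0 [:: 1%N].
have Hinv : Inv (size a) 1 T1.
  split; first by rewrite size_set_nth size_nseq; lia.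
  move=> c; rewrite nth_set_nth /=; case: c => [//|c] /=.
  by rewrite nth_nseq; case: ifP.
have Hk : forall c, (c < size a)%N -> nth 0%N (rcons a b) c = nth 0%N (rcons a b.+1) c.
  by move=> c Hc; rewrite !nth_rcons_lt.
have Hcnt : (1 + count id p' <= size a)%N by lia.
have [E _] := prefix 2 Hk Hinv Hcnt.
rewrite !fill_aux_cat E !fill_aux_cons.
set Tp := fill_aux (rcons a b.+1) T1 2 p'.
have -> : fill_step (rcons a b) Tp (2 + size p') true =
          fill_step (rcons a b.+1) Tp (2 + size p') true by [].
set Ts := fill_step (rcons a b.+1) Tp (2 + size p') true.
have HB : Bd (2 + size p').+1 Ts.
  apply: Bd_step; rewrite /Tp -E; apply: Bd_aux.
  move=> c; rewrite nth_set_nth /=; case: c => [//|c] /=.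
  by rewrite nth_nseq; case: ifP.
congr sumn; apply: (@top_ranks_Rel (2 + size p').+1) => //.
exact: (@Rel_nseq _ (rcons a b) (rcons a b.+1) _ _ _ n n.+1 (Rel_refl HB) (leqnn _)).
Qed.

Lemma Ctilde_step (R : comNzRingType) (q t : R) a b : (0 < size a)%N ->
  Ctilde q t (rcons a b.+1) = Ctilde q t (rcons a b).
Proof.
move=> Ha; rewrite /Ctilde (@sum_rcons_false _ (Nk (rcons a b)) (Nk (rcons a b.+1)) (is_dyck (rcons a b.+1)) (fun w => q ^+ area (rcons a b.+1) w * t ^+ depth (rcons a b.+1) w)%R).
- apply: eq_big => w; first exact: dyck_step.
  move=> Hd; rewrite dyck_step in Hd.
  have Hc : count id w = (size a).+1.
    by move: Hd => /and3P [_ /eqP -> _]; rewrite size_rcons.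
  rewrite area_step //.
  have [p [n [Ew Hp]]] := decomp Hc.
  case: p Ew Hp => [|x p'] Ew Hp; first by move: Hp => /= Hp; lia.
  case: x Ew Hp => Ew Hp.
    rewrite Ew rcons_decomp /= depth_step //.
    by move: Hp => /=; lia.
  exfalso; move: Hd => /and3P [_ _]; rewrite Ew /ranks /=.
  by case: p' {Ew Hp} => [|y p''].
- exact: Nk_rcons.
- by move=> w Hs Hd; exact: (@last_false a b w Hs Hd).
Qed.

Theorem proposition5p3 (R : comNzRingType) (q t : R) (a : seq nat) (b c : nat) :
  (0 < size a)%N -> all (fun x => 0 < x)%N a -> (0 < b)%N -> (0 < c)%N ->
  Ctilde q t (rcons a b) = Ctilde q t (rcons a c).
Proof.
move=> Ha _ _ _.
have H : forall b, Ctilde q t (rcons a b) = Ctilde q t (rcons a 0).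
  by elim=> [//|b' IH]; rewrite Ctilde_step.
by rewrite !H.
Qed.
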